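(* Let $w,h\ge 1$ and $G=P_w(U)\sqcap P_h$. (1) If $U=\{1\}$ or $U=\{w\}$, then $Z(G)\le \lceil h/2\rceil$. (2) If $U=\{i\}$ with $1<i<w$, then $Z(G)\le h$.
   Context: All graphs are finite, simple and undirected. Zero forcing: given a graph $G$ and a set $S\subseteq V(G)$ of initially filled vertices, the color change rule says that if a filled vertex $v$ has exactly one unfilled neighbor $u$, then $v$ forces $u$ to become filled. $S$ is a zero forcing set if repeatedly applying this rule eventually fills every vertex of $G$. The zero forcing number $Z(G)$ is the minimum cardinality of a zero forcing set of $G$. The path $P_n$ has vertex set $\{1,\dots,n\}$ and edges $\{k,k+1\}$ for $1\le k\le n-1$. Generalized hierarchical product: for graphs $W,H$ and $U\subseteq V(W)$ (the root set), $W(U)\sqcap H$ is the graph with vertex set $V(W)\times V(H)$ in which $(x_1,y_1)$ and $(x_2,y_2)$ are adjacent iff either ($x_1=x_2\in U$ and $y_1y_2\in E(H)$) or ($y_1=y_2$ and $x_1x_2\in E(W)$). *)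

(* Defs.v *)
From mathcomp Require Import all_boot.
Set Implicit Arguments. Unset Strict Implicit. Unset Printing Implicit Defensive.

Section ZeroForcing.
Variable T : finType.
Variable e : rel T.

(* Performing the
   forcings of one round sequentially is also legal, so this is just a
   grouping of individual forces. *)
Definition force_step (F : {set T}) : {set T} :=
  F :|: [set u | (u \notin F) &&
          [exists v, [&& v \in F, e v u &
             [forall x, (e v x && (x \notin F)) ==> (x == u)]]]].

(* The final coloring obtained from S by applying the rule until no more
   forces are possible (#|T| rounds suffice). *)
Definition zf_closure (S : {set T}) : {set T} := iter #|T| force_step S.

Definition zero_forcing_set (S : {set T}) : bool := zf_closure S == setT.

(* Z(G): minimum cardinality of a zero forcing set (V(G) itself is always one,
   so the bound #|T| used as the neutral element is never the strict min). *)
Definition zero_forcing_number : nat :=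
  \big[minn/#|T|]_(S : {set T} | zero_forcing_set S) #|S|.
End ZeroForcing.

(* Path P_n on vertex set 'I_n (vertex k+1 of the paper is ordinal k). *)
Definition path_adj (n : nat) : rel 'I_n :=
  fun a b => (a.+1 == b :> nat) || (b.+1 == a :> nat).

Definition hprod (A B : finType) (eW : rel A) (U : {set A}) (eH : rel B)
  : rel (A * B) :=
  fun x y => [&& x.1 == y.1, x.1 \in U & eH x.2 y.2]
             || ((x.2 == y.2) && eW x.1 y.1).

Definition path_hprod (w h : nat) (U : {set 'I_w}) : rel ('I_w * 'I_h) :=
  hprod (@path_adj w) U (@path_adj h).

(* Main.v *)
Require Import Defs.
From mathcomp Require Import all_boot zify.
Set Implicit Arguments. Unset Strict Implicit. Unset Printing Implicit Defensive.

Lemma force_fix (T : finType) (e : rel T) (S : {set T}) :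
  force_step e (zf_closure e S) = zf_closure e S.
Proof.
rewrite /zf_closure; set f := force_step e.
have ext (X : {set T}) : X \subset f X by apply: subsetUl.
have grow (X : {set T}) : f X != X -> #|X| < #|f X|.
  move=> ne; apply: proper_card; rewrite properEneq ext andbT eq_sym //.
have H k : f (iter k f S) = iter k f S \/ k < #|iter k.+1 f S|.
  elim: k => [|k [IH|IH]].
  - case: (eqVneq (f S) S) => [->|ne]; [by left|right].
    by have := grow _ ne; rewrite /=; lia.
  - by left; rewrite iterS IH IH.
  - case: (eqVneq (f (iter k.+1 f S)) (iter k.+1 f S)) => [E|ne]; [by left|right].
    have := grow _ ne; rewrite [iter k.+2 _ _]iterS; lia.
case: (H #|T|) => // Hc.
have := subset_leq_card (subsetT (iter #|T|.+1 f S)); rewrite cardsT; lia.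
Qed.

Lemma closure_force (T : finType) (e : rel T) (S : {set T}) (v u : T) :
  v \in zf_closure e S -> e v u ->
  (forall x, e v x -> x != u -> x \in zf_closure e S) -> u \in zf_closure e S.
Proof.
set C := zf_closure e S => Hv Hvu Hx.
have <- : force_step e C = C by exact: force_fix.
rewrite {1}/force_step in_setU.
case: (boolP (u \in C)) => //= Hu.
rewrite inE Hu /=; apply/existsP; exists v; rewrite Hv Hvu /=.
apply/forallP => x; apply/implyP => /andP [Hvx Hxn].
case: eqVneq => // ne; by rewrite (Hx x Hvx ne) in Hxn.
Qed.

Lemma sub_closure (T : finType) (e : rel T) (S : {set T}) : S \subset zf_closure e S.
Proof.
rewrite /zf_closure; elim: #|T| => // n IH.
by rewrite iterS; apply: subset_trans IH (subsetUl _ _).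
Qed.

Lemma zfn_le (T : finType) (e : rel T) (S0 : {set T}) :
  zero_forcing_set e S0 -> zero_forcing_number e <= #|S0|.
Proof.
move=> HS; rewrite /zero_forcing_number.
have : S0 \in index_enum {set T} by rewrite mem_index_enum.
elim: (index_enum _) => // a s IH; rewrite big_cons inE.
case/orP => [/eqP <-|Hin]; first by rewrite HS geq_minl.
case: ifP => _; last exact: IH.
by rewrite geq_min IH ?orbT.
Qed.

Lemma hadj w h (i : 'I_w) (a a' : 'I_w) (b b' : 'I_h) :
  path_hprod [set i] (a, b) (a', b') =
  [&& a == a', a == i & path_adj b b'] || ((b == b') && path_adj a a').
Proof. by rewrite /path_hprod /hprod in_set1. Qed.

Lemma col0_zfs w h (hw : 0 < w) (i : 'I_w) :
  zero_forcing_set (path_hprod [set i]) [set (Ordinal hw, b) | b : 'I_h].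
Proof.
set S := [set _ | _ in _]; rewrite /zero_forcing_set; set C := zf_closure _ S.
have claim k : k < w -> forall x : 'I_w * 'I_h, val x.1 <= k -> x \in C.
  elim: k => [_|k IH Hk] [a b] /= Ha.
    have -> : a = Ordinal hw by apply: val_inj => /=; lia.
    by apply: (subsetP (sub_closure _ _)); apply/imsetP; exists b.
  case: (leqP a k) => Hak; first by apply: (IH (ltnW Hk)).
  apply: (@closure_force _ _ _ (Ordinal (ltnW Hk), b)).
  - by apply: (IH (ltnW Hk)).
  - by rewrite hadj eqxx /path_adj /=; apply/orP; right; apply/orP; left; apply/eqP; lia.
  - move=> [a' b'] /[!hadj] /orP [/andP [/eqP <- _]|/andP [/eqP <- Hp]] Hne.
      by apply: (IH (ltnW Hk)).
    apply: (IH (ltnW Hk)) => /=.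
    move: Hp; rewrite /path_adj /= => /orP [/eqP E|/eqP E]; last lia.
    have Ea : a' = a by apply: val_inj => /=; lia.
    by rewrite Ea eqxx in Hne.
apply/eqP/setP => x; rewrite inE; apply: (claim w.-1); [lia|].
by rewrite -ltnS prednK //; exact: ltn_ord.
Qed.

Lemma evnb (x y : nat) : x.+1 = y \/ y.+1 = x -> odd x -> ~~ odd y.
Proof. by case=> <- /=; rewrite ?negbK. Qed.

Lemma end_zfs w h (hh : 0 < h) (i j : 'I_w) (d : 'I_w -> nat)
 (Hadj : forall a a', path_adj a a' = ((d a).+1 == d a') || ((d a').+1 == d a))
 (Hinj : injective d)
 (Hi : d i = 0)
 (Hj : forall a, d a <= d j)
 (Hup : forall a, d a < d j -> exists a', d a' = (d a).+1)
 (Hdown : forall a, 0 < d a -> exists a', (d a').+1 = d a) :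
 zero_forcing_set (path_hprod [set i])
   [set (j, insubd (Ordinal hh) (val k).*2) | k : 'I_(uphalf h)].
Proof.
set S := [set _ | _ in _]; rewrite /zero_forcing_set; set C := zf_closure _ S.
have inS b : ~~ odd (val b) -> (j, b) \in C.
  move=> Hb; apply: (subsetP (sub_closure _ _)); apply/imsetP.
  have Hk : (val b)./2 < uphalf h.
    rewrite uphalf_half; have := odd_double_half h; have := even_halfK Hb.
    move: (ltn_ord b); rewrite -[nat_of_ord b]/(val b); lia.
  exists (Ordinal Hk) => //; congr (_, _); apply: val_inj.
  by rewrite /= val_insubd /= (even_halfK Hb) ltn_ord.
have Hi0 a : d a = 0 -> a = i by move=> H; apply: Hinj; rewrite H Hi.
have rowA (b : 'I_h) : ~~ odd (val b) -> forall a, (a, b) \in C.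
  move=> Hb.
  suff K m : forall a, d j - m <= d a -> (a, b) \in C.
    by move=> a; apply: (K (d j)); lia.
  elim: m => [|m IH] a Ha.
    have -> : a = j by apply: Hinj; have := Hj a; lia.
    exact: inS.
  case: (leqP (d j - m) (d a)) => Hm; first exact: IH.
  have [a' Ha'] := Hup a (ltac:(lia)).
  apply: (@closure_force _ _ _ (a', b)).
  - by apply: IH; lia.
  - by rewrite hadj Hadj Ha' !eqxx /= !orbT.
  - move=> [a2 b2] /[!hadj] /orP [/and3P [/eqP E1 /eqP E2 _]|/andP [/eqP <- Hp]] Hne.
      by move: Ha'; rewrite E2 Hi.
    move: Hp; rewrite Hadj => /orP [/eqP E|/eqP E].
      by apply: IH; lia.
    have Ea : a2 = a by apply: Hinj; lia.
    by rewrite Ea eqxx in Hne.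
suff KK nn : forall b : 'I_h, val b <= nn -> forall a, (a, b) \in C.
  by apply/eqP/setP => [[a b]]; rewrite inE; apply: (KK (val b)).
elim: nn => [|nn IHr] b Hbn.
  by apply: rowA; move: Hbn; case: (val b).
case: (leqP (val b) nn) => Hbn'; first exact: IHr.
case: (boolP (odd (val b))) => Hb; last exact: rowA.
have Hb0 : 0 < val b by move: Hb; case: (val b).
have Hbp : (val b).-1 < h by have : val b < h := ltn_ord b; lia.
set bp := Ordinal Hbp.
have Hbpe : ~~ odd (val bp) by move: Hb Hb0 => /=; case: (val b).
suff K n : forall a, d a <= n -> (a, b) \in C by move=> a; apply: (K (d a)).
elim: n => [|n IH] a Ha.
  have -> : a = i by apply: Hi0; lia.
  apply: (@closure_force _ _ _ (i, bp)); first exact: rowA.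
    by rewrite hadj !eqxx /path_adj /= prednK // eqxx.
  move=> [a2 b2] /[!hadj] /orP [/and3P [/eqP <- _ Hp]|/andP [/eqP <- _]] Hne; last exact: rowA.
  move: Hp; rewrite /path_adj => /orP [/eqP E|/eqP E].
    have Eb : b2 = b by apply: val_inj; by rewrite /= -E prednK.
    by rewrite Eb eqxx in Hne.
  apply: IHr; move: E Hbn Hbn'; rewrite /=; apply: (fun x y z (H : x.+1 = y.-1) (H2 : y <= z.+1) (H3 : z < y) => (ltac:(lia) : x <= z)).
case: (leqP (d a) n) => Hn; first exact: IH.
have [a' Ha'] := Hdown a (ltac:(lia)).
apply: (@closure_force _ _ _ (a', b)).
- by apply: IH; lia.
- by rewrite hadj Hadj Ha' !eqxx /= !orbT.
- move=> [a2 b2] /[!hadj] /orP [/and3P [_ _ Hp]|/andP [/eqP <- Hp]] Hne.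
    apply: rowA; move: Hp; rewrite /path_adj => /orP [/eqP E|/eqP E].
      exact: (evnb (or_introl E) Hb).
    exact: (evnb (or_intror E) Hb).
  move: Hp; rewrite Hadj => /orP [/eqP E|/eqP E].
    have Ea : a2 = a by apply: Hinj; lia.
    by rewrite Ea eqxx in Hne.
  by apply: IH; lia.
Qed.

Theorem mainTheorem1 (w h : nat) (hw : 0 < w) (hh : 0 < h) :
  (forall i : 'I_w, (val i = 0 \/ val i = w.-1) ->
     zero_forcing_number (@path_hprod w h [set i]) <= uphalf h)
  /\
  (forall i : 'I_w, 0 < val i < w.-1 ->
     zero_forcing_number (@path_hprod w h [set i]) <= h).
Proof.
have Hw1 : w.-1 < w by lia.
split; last first.
  move=> i _; apply: leq_trans (zfn_le (col0_zfs h hw i)) _.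
  by apply: leq_trans (leq_imset_card _ _) _; rewrite ?cardsT card_ord.
move=> i Hi.
suff [j [d [H1 [H2 [H3 [H4 [H5 H6]]]]]]] : exists (j : 'I_w) (d : 'I_w -> nat),
  (forall a a', path_adj a a' = ((d a).+1 == d a') || ((d a').+1 == d a)) /\
  injective d /\ d i = 0 /\ (forall a, d a <= d j) /\
  (forall a, d a < d j -> exists a', d a' = (d a).+1) /\
  (forall a, 0 < d a -> exists a', (d a').+1 = d a).
  apply: leq_trans (zfn_le (end_zfs hh H1 H2 H3 H4 H5 H6)) _.
  by apply: leq_trans (leq_imset_card _ _) _; rewrite ?cardsT card_ord.
case: Hi => Hi.
- exists (Ordinal Hw1), (fun a : 'I_w => val a); split => //.
  split; first exact: val_inj.
  split => //; split; first by move=> a /=; rewrite -ltnS (prednK hw) ltn_ord.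
  split.
    move=> a Ha; have Ha' : (val a).+1 < w by move: Ha => /=; lia.
    by exists (Ordinal Ha').
  move=> a Ha; have Ha' : (val a).-1 < w by have : val a < w := ltn_ord a; lia.
  by exists (Ordinal Ha') => /=; rewrite prednK.
- exists (Ordinal hw), (fun a : 'I_w => w.-1 - nat_of_ord a); split.
    move=> a a'; rewrite /path_adj.
    have : nat_of_ord a < w := ltn_ord a; have : nat_of_ord a' < w := ltn_ord a'.
    move: (nat_of_ord a) (nat_of_ord a') => x y Hx Hy.
    apply/idP/idP => /orP [] /eqP E; apply/orP; (left + right); apply/eqP; lia.
  split.
    move=> a a' /= E; apply: ord_inj.
    have : nat_of_ord a < w := ltn_ord a; have : nat_of_ord a' < w := ltn_ord a'; lia.
  split; first by rewrite Hi subnn.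
  split; first by move=> a /=; lia.
  split.
    move=> a /= Ha; have Ha' : (nat_of_ord a).-1 < w by have : nat_of_ord a < w := ltn_ord a; lia.
    by exists (Ordinal Ha') => /=; have : nat_of_ord a < w := ltn_ord a; lia.
  move=> a /= Ha; have Ha' : (nat_of_ord a).+1 < w by lia.
  by exists (Ordinal Ha') => /=; lia.
Qed.
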